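(* Let $K=\mathbb{Z}/3$, let $G$ be a simple graph with edges $e_1,\dots,e_s$ ($s\ge1$), and let $X$, $C_X(d)$ be as in the context. For each integer $d$, let $\mathcal{B}_d$ be the set of monomials of $S$ of degree $d$ not divisible by the leading term (for the graded reverse lexicographic order with $t_1>\dots>t_s$) of any polynomial in the ideal $(I(X),t_s^2)$, with $\mathcal{B}_d=\emptyset$ for $d<0$, and let $\beta(d)=|\mathcal{B}_d|$. Then for every $d\ge0$, $$\dim_K C_X(d)=\sum_{i\ge0}\beta(d-2i).$$
   Context: Let $G$ be a simple graph with vertex set $\{1,\dots,n\}$ and a fixed ordering $e_1,\dots,e_s$ of its edges; edge $e_k$ is identified with the variable $t_k$ of $S=K[t_1,\dots,t_s]$, $K$ a finite field. Let $X\subseteq\mathbb{P}^{s-1}$ be the image of the projective torus $\{(x_1:\dots:x_n): x_i\neq0\}\subseteq\mathbb{P}^{n-1}$ under the map whose $k$-th coordinate is $x_ix_j$ when $e_k=\{i,j\}$. Order $X=\{P_1,\dots,P_m\}$. For $d\ge0$ the parameterized code of order $d$, $C_X(d)\subseteq K^m$, is the image of the space $S_d$ of homogeneous polynomials of degree $d$ under $f\mapsto \big(f(P_1)/f_0(P_1),\dots,f(P_m)/f_0(P_m)\big)$ with $f_0=t_1^d$. $I(X)\subseteq S$ is the ideal generated by homogeneous polynomials vanishing on $X$. *)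

(* Defs.v *)
From HB Require Import structures.
From mathcomp Require Import all_boot all_order all_algebra.
From mathcomp Require Import mpoly.
From Stdlib Require Import ClassicalEpsilon.

Set Implicit Arguments.
Unset Strict Implicit.
Unset Printing Implicit Defensive.

Import Order.TTheory GRing.Theory.
Local Open Scope ring_scope.

Notation K := 'F_3.

Definition pbool (P : Prop) : bool :=
  if excluded_middle_informative P then true else false.

Lemma pred_lt (s : nat) : (0 < s)%N -> (s.-1 < s)%N.
Proof. by move=> hs; rewrite ltn_predL. Qed.

(* indices of t_1 and t_s (0-based: 0 and s-1) *)
Definition t_first (s : nat) (hs : (0 < s)%N) : 'I_s := Ordinal hs.
Definition t_last (s : nat) (hs : (0 < s)%N) : 'I_s := Ordinal (pred_lt hs).

(* A simple graph on vertices 'I_n (i.e. {1..n}) with an ordering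
   e_1..e_s of its edges: each edge is a 2-element subset of the
   vertices, and distinct indices give distinct edges. *)
Definition simple_graph_edges (n s : nat) (e : 'I_s -> {set 'I_n}) : Prop :=
  (forall k, #|e k| = 2%N) /\ injective e.

(* Projective space P^{s-1}(K): the point of a nonzero vector v is its
   class {c v : c in K^*}. *)
Definition pclass (s : nat) (v : 'rV[K]_s) : {set 'rV[K]_s} :=
  [set c *: v | c in [set c : K | c != 0]].

(* projective torus of P^{n-1}: all coordinates nonzero *)
Definition torus (n : nat) : {set 'rV[K]_n} :=
  [set x : 'rV[K]_n | [forall i, x 0 i != 0]].

(* the monomial map: k-th coordinate x_i x_j with e_k = {i,j} *)
Definition edge_map (n s : nat) (e : 'I_s -> {set 'I_n}) (x : 'rV[K]_n)
  : 'rV[K]_s :=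
  \row_(k < s) \prod_(i in e k) x 0 i.

(* X, as a set of projective points *)
Definition Xset (n s : nat) (e : 'I_s -> {set 'I_n}) : {set {set 'rV[K]_s}} :=
  [set pclass (edge_map e x) | x in torus n].

Definition rep (s : nat) (P : {set 'rV[K]_s}) : 'rV[K]_s :=
  odflt 0 [pick v in P].

Definition evalv (s : nat) (v : 'rV[K]_s) (f : {mpoly K[s]}) : K :=
  meval (fun k => v 0 k) f.

(* codeword of f in C_X(d): (f(P_i)/f_0(P_i))_i, f_0 = t_1^d, with
   X = {P_1,..,P_m} ordered by enum. *)
Definition codeword (n s : nat) (hs : (0 < s)%N) (e : 'I_s -> {set 'I_n})
  (d : nat) (f : {mpoly K[s]}) : 'rV[K]_#|Xset e| :=
  \row_(i < #|Xset e|)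
    (evalv (rep (enum_val i)) f /
     evalv (rep (enum_val i)) ('X_(t_first hs) ^+ d)).

(* C_X(d) = image of S_d: spanned by the images of the degree-d monomials *)
Definition CX (n s : nat) (hs : (0 < s)%N) (e : 'I_s -> {set 'I_n}) (d : nat)
  : {vspace 'rV[K]_#|Xset e|} :=
  <<[seq codeword hs e d 'X_[bmnm m] |
       m <- enum [set: 'X_{1..s < d.+1}] & mdeg (bmnm m) == d]>>%VS.

Definition vanishes_on_X (n s : nat) (e : 'I_s -> {set 'I_n}) (f : {mpoly K[s]}) : Prop :=
  forall P, P \in Xset e -> forall v, v \in P -> evalv v f = 0.

(* generators of I(X): homogeneous polynomials vanishing on X *)
Definition IX_gen (n s : nat) (e : 'I_s -> {set 'I_n}) (f : {mpoly K[s]}) : Prop :=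
  (exists d : nat, f \is d.-homog) /\ vanishes_on_X e f.

Definition in_IX_ts2 (n s : nat) (hs : (0 < s)%N) (e : 'I_s -> {set 'I_n})
  (g : {mpoly K[s]}) : Prop :=
  exists (r : seq ({mpoly K[s]} * {mpoly K[s]})) (h : {mpoly K[s]}),
    (forall p, p \in r -> IX_gen e p.1) /\
    g = \sum_(p <- r) p.1 * p.2 + h * 'X_(t_last hs) ^+ 2.

(* graded reverse lexicographic order with t_1 > ... > t_s:
   grevlex_lt m1 m2 means m1 < m2 *)
Definition grevlex_lt (s : nat) (m1 m2 : 'X_{1..s}) : bool :=
  (mdeg m1 < mdeg m2)%N ||
  ((mdeg m1 == mdeg m2) &&
   [exists k : 'I_s, (m2 k < m1 k)%N &&
      [forall j : 'I_s, (k < j)%N ==> (m1 j == m2 j)]]).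

Definition grevlex_lead (s : nat) (g : {mpoly K[s]}) (u : 'X_{1..s}) : Prop :=
  g != 0 /\ u \in msupp g /\
  (forall u', u' \in msupp g -> u' = u \/ grevlex_lt u' u).

Definition in_B (n s : nat) (hs : (0 < s)%N) (e : 'I_s -> {set 'I_n})
  (d : nat) (m : 'X_{1..s}) : Prop :=
  mdeg m = d /\
  ~ (exists g u, in_IX_ts2 hs e g /\ grevlex_lead g u /\ (u <= m)%MM).

Definition beta (n s : nat) (hs : (0 < s)%N) (e : 'I_s -> {set 'I_n}) (d : nat) : nat :=
  #|[set m : 'X_{1..s < d.+1} | pbool (in_B hs e d (bmnm m))]|.

Section CXImage.
Variables (n s : nat) (hs : (0 < s)%N) (e : 'I_s -> {set 'I_n}) (d : nat).

Lemma codewordD f g : codeword hs e d (f + g) = codeword hs e d f + codeword hs e d g.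
Proof. by apply/matrixP=> i j; rewrite !mxE /evalv mevalD mulrDl. Qed.

Lemma codewordZ c f : codeword hs e d (c *: f) = c *: codeword hs e d f.
Proof. by apply/matrixP=> i j; rewrite !mxE /evalv mevalZ mulrA. Qed.

Lemma codeword_sum I (r : seq I) (P : pred I) (F : I -> {mpoly K[s]}) :
  codeword hs e d (\sum_(i <- r | P i) F i) = \sum_(i <- r | P i) codeword hs e d (F i).
Proof.
elim/big_rec2: _ => [|i y f _ <-]; last by rewrite codewordD.
by apply/matrixP=> i j; rewrite !mxE /evalv meval0 mul0r.
Qed.

Lemma CXP v : v \in CX hs e d <-> exists f : {mpoly K[s]}, f \is d.-homog /\ v = codeword hs e d f.
Proof.
set ms := [seq m <- enum [set: 'X_{1..s < d.+1}] | mdeg (bmnm m) == d].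
have -> : CX hs e d = <<[seq codeword hs e d 'X_[bmnm m] | m <- ms]>>%VS by [].
split.
- move=> /(coord_span (X := in_tuple _)) ->.
  set S := [seq codeword hs e d 'X_[bmnm m] | m <- ms].
  exists (\sum_(i < size S) coord (in_tuple S) i v *: 'X_[bmnm (nth bm0 ms i)]).
  split.
    apply: rpred_sum => i _; apply: rpredZ; rewrite dhomogX.
    have : nth bm0 ms i \in ms by apply: mem_nth; rewrite -(size_map (fun m => codeword hs e d 'X_[bmnm m])).
    by rewrite mem_filter => /andP[].
  rewrite codeword_sum; apply: eq_bigr => i _; rewrite codewordZ; congr (_ *: _).
  by rewrite /S (nth_map bm0) // -(size_map (fun m => codeword hs e d 'X_[bmnm m])).
- move=> [f [hf ->]]; rewrite (mpolyE f) codeword_sum big_seq.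
  apply: memv_suml => m /= msupp_m; rewrite codewordZ; apply: memvZ; apply: memv_span.
  have hm : mdeg m = d by move/dhomogP: hf => /(_ m msupp_m).
  have hb : (mdeg m < d.+1)%N by rewrite hm.
  apply/mapP; exists (BMultinom hb) => //.
  by rewrite mem_filter /= hm eqxx mem_enum in_setT.
Qed.
End CXImage.

(* Main.v *)
Require Import Defs.
From HB Require Import structures.
From mathcomp Require Import all_boot all_order all_algebra.
From mathcomp Require Import mpoly.
From mathcomp Require Import zify.
From Stdlib Require Import ClassicalEpsilon.
Set Implicit Arguments.
Unset Strict Implicit.
Unset Printing Implicit Defensive.
Import Order.TTheory GRing.Theory.
Local Open Scope ring_scope.

Section Glt.
Variable s : nat.
Implicit Types m u w : 'X_{1..s}.
Local Notation glt := (@grevlex_lt s).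

Lemma glt_irr m : ~~ glt m m.
Proof. by apply/negP => /orP[|/andP[_ /existsP[k]]]; rewrite ltnn. Qed.

Lemma glt_deg m1 m2 : glt m1 m2 -> (mdeg m1 <= mdeg m2)%N.
Proof. by case/orP=> [/ltnW|/andP[/eqP->]]. Qed.

Lemma glt_trans m2 m1 m3 : glt m1 m2 -> glt m2 m3 -> glt m1 m3.
Proof.
move=> /orP[h1|/andP[/eqP e1 /existsP[k1 /andP[a1 /forallP b1]]]]
       /orP[h2|/andP[/eqP e2 /existsP[k2 /andP[a2 /forallP b2]]]].
- by apply/orP; left; exact: ltn_trans h1 h2.
- by apply/orP; left; rewrite -e2.
- by apply/orP; left; rewrite e1.
apply/orP; right; rewrite e1 e2 eqxx /=.
case: (ltngtP k1 k2) => [lt|gt|eq].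
- apply/existsP; exists k2; move: (b1 k2); rewrite lt /= => /eqP->; rewrite a2 /=.
  apply/forallP=> j; apply/implyP=> hj.
  move: (b1 j) (b2 j); rewrite (ltn_trans lt hj) hj /= => /eqP-> /eqP->; done.
- apply/existsP; exists k1; move: (b2 k1); rewrite gt /= => /eqP<-; rewrite a1 /=.
  apply/forallP=> j; apply/implyP=> hj.
  move: (b1 j) (b2 j); rewrite (ltn_trans gt hj) hj /= => /eqP-> /eqP->; done.
- have ek : k1 = k2 by apply: val_inj.
  subst k2; apply/existsP; exists k1; rewrite (ltn_trans a2 a1) /=.
  apply/forallP=> j; apply/implyP=> hj.
  move: (b1 j) (b2 j); rewrite hj /= => /eqP-> /eqP->; done.
Qed.

Lemma glt_total m1 m2 : m1 != m2 -> glt m1 m2 || glt m2 m1.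
Proof.
move=> ne; rewrite /grevlex_lt.
case: (ltngtP (mdeg m1) (mdeg m2)) => [//|_|ed].
  by apply/orP; right; apply/orP; left.
have [k0 hk0] : exists k0, m1 k0 != m2 k0.
  apply/existsP; apply: contraR ne => /existsPn h; apply/eqP/mnmP=> i.
  by move: (h i); rewrite negbK => /eqP.
case: (@arg_maxnP _ k0 (fun k => m1 k != m2 k) (fun k : 'I_s => (k : nat)) hk0) => k hk kmax.
have hj : [forall j : 'I_s, (k < j)%N ==> (m1 j == m2 j)].
  apply/forallP=> j; apply/implyP=> kj; apply: contraTT kj => nj.
  by rewrite -leqNgt; exact: kmax.
rewrite /=.
case: (ltngtP (m1 k) (m2 k)) => [l|l|l]; last by rewrite l eqxx in hk.
- apply/orP; right; apply/existsP; exists k; rewrite l /=.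
  apply/forallP=> j; apply/implyP=> kj; move/forallP/(_ j): hj; rewrite kj /= eq_sym; done.
- apply/orP; left; apply/existsP; exists k; rewrite l /=; exact: hj.
Qed.

Lemma glt_addl w m1 m2 : glt (w + m1)%MM (w + m2)%MM = glt m1 m2.
Proof.
rewrite /grevlex_lt !mdegD ltn_add2l eqn_add2l; congr (_ || (_ && _)).
apply: eq_existsb => k; rewrite !mnmDE ltn_add2l; congr (_ && _).
by apply: eq_forallb => j; rewrite !mnmDE eqn_add2l.
Qed.

Lemma glt_tl (hs : (0 < s)%N) m1 m2 : mdeg m1 = mdeg m2 ->
  (m2 (t_last hs) < m1 (t_last hs))%N -> glt m1 m2.
Proof.
move=> ed lt; apply/orP; right; rewrite ed eqxx /=; apply/existsP; exists (t_last hs).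
rewrite lt /=; apply/forallP=> j; apply/implyP=> /= hj.
by move: (ltn_ord j) hj => /=; lia.
Qed.

End Glt.

Section Lead.
Variable s : nat.
Implicit Types m u w : 'X_{1..s}.
Local Notation glt := (@grevlex_lt s).

Lemma seq_max (r : seq 'X_{1..s}) : r != [::] ->
  exists2 u, u \in r & forall u', u' \in r -> u' = u \/ glt u' u.
Proof.
elim: r => // x r IH _.
case: (eqVneq r [::]) => [->|/IH [y yr ymax]].
  by exists x; rewrite ?mem_seq1 // => u'; rewrite mem_seq1 => /eqP; left.
case: (eqVneq x y) => [->|nxy].
  by exists y; rewrite ?inE ?eqxx // => u'; rewrite inE => /orP[/eqP->|/ymax]; [left|].
case/orP: (glt_total nxy) => h.
  exists y; first by rewrite inE yr orbT.
  by move=> u'; rewrite inE => /orP[/eqP->|/ymax]; [right|].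
exists x; first by rewrite inE eqxx.
move=> u'; rewrite inE => /orP[/eqP->|/ymax[->|h']]; [left|right|right] => //.
exact: glt_trans h.
Qed.

Lemma lead_exists (g : {mpoly K[s]}) : g != 0 -> exists u, grevlex_lead g u.
Proof.
move=> nz; have : msupp g != [::] by rewrite msupp_eq0.
by case/seq_max => u hu hmax; exists u.
Qed.

Lemma lead_deg (g : {mpoly K[s]}) u u' : grevlex_lead g u -> u' \in msupp g ->
  (mdeg u' <= mdeg u)%N.
Proof. by case=> _ [_ h] /h [->|/glt_deg]. Qed.

Lemma lead_uniq (g : {mpoly K[s]}) u1 u2 : grevlex_lead g u1 -> grevlex_lead g u2 -> u1 = u2.
Proof.
move=> [_ [i1 h1]] [_ [i2 h2]].
case: (h1 _ i2) => // l1; case: (h2 _ i1) => // l2.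
by move: (glt_trans l1 l2); rewrite (negbTE (glt_irr _)).
Qed.

Lemma leadMX (g : {mpoly K[s]}) u w : grevlex_lead g u ->
  grevlex_lead (g * 'X_[w]) (w + u)%MM.
Proof.
move=> [nz [iu hu]].
have c : (g * 'X_[w])@_(w + u) != 0 by rewrite mcoeffMX -mcoeff_msupp.
split; first by apply: contraNneq c => ->; rewrite mcoeff0.
split; first by rewrite mcoeff_msupp.
move=> u'; rewrite (perm_mem (msuppMX _ _)) => /mapP[u'' /hu [->|h] ->]; [left|right] => //.
by rewrite glt_addl.
Qed.

End Lead.

Lemma pihom_coef s d (p : {mpoly K[s]}) m :
  (pihomog mdeg d p)@_m = if mdeg m == d then p@_m else 0.
Proof.
rewrite pihomogE raddf_sum /= big_mkcond /=.
under eq_bigr do rewrite mcoeffZ mcoeffX.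
case: (boolP (m \in msupp p)) => hm.
  rewrite (bigD1_seq m) ?msupp_uniq //= eqxx mulr1 big1 ?addr0; first by case: ifP.
  by move=> m' ne; case: ifP => // _; rewrite (negbTE ne) mulr0.
rewrite memN_msupp_eq0 // if_same big1 // => m' _.
case: ifP => // _; case: (eqVneq m' m) => [->|ne]; first by rewrite memN_msupp_eq0 // mul0r.
by rewrite mulr0.
Qed.

Section Main.
Variables (n s : nat) (hs : (0 < s)%N) (e : 'I_s -> {set 'I_n}).
Local Notation tl := (t_last hs).
Local Notation e2 := (U_(tl) + U_(tl))%MM.
Local Notation van := (vanishes_on_X e).
Local Notation glt := (@grevlex_lt s).

Lemma van0 : van 0.
Proof. by move=> P _ v _; rewrite /evalv meval0. Qed.

Lemma vanD f g : van f -> van g -> van (f + g).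
Proof. by move=> hf hg P hP v hv; rewrite /evalv mevalD -/(evalv v f) -/(evalv v g) (hf P hP v hv) (hg P hP v hv) addr0. Qed.

Lemma vanMr f q : van f -> van (f * q).
Proof. by move=> hf P hP v hv; rewrite /evalv mevalM -/(evalv v f) (hf P hP v hv) mul0r. Qed.

Lemma vanMl f q : van f -> van (q * f).
Proof. by move=> hf P hP v hv; rewrite /evalv mevalM -/(evalv v f) (hf P hP v hv) mulr0. Qed.

Lemma van_sum (I : eqType) (r : seq I) (F : I -> {mpoly K[s]}) :
  (forall i, i \in r -> van (F i)) -> van (\sum_(i <- r) F i).
Proof.
elim: r => [|x r IH] h; first by rewrite big_nil; exact: van0.
rewrite big_cons; apply: vanD; first by apply: h; rewrite inE eqxx.
by apply: IH => i hi; apply: h; rewrite inE hi orbT.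
Qed.

Lemma Xset_coord P v k : P \in Xset e -> v \in P -> v 0 k != 0.
Proof.
case/imsetP=> x; rewrite inE => /forallP hx -> /imsetP[c]; rewrite inE => nc ->.
rewrite !mxE mulf_neq0 //; apply/prodf_neq0 => i _; exact: hx.
Qed.

Lemma van_pihomogM d k p q : p \is k.-homog -> van p ->
  van (pihomog mdeg d (p * q)).
Proof.
move=> hp vp; rewrite (pihomog_partitionE (mf := mdeg) (p := q) (k := msize q)) //.
rewrite mulr_sumr raddf_sum /=; apply: van_sum => j _.
have hj : p * pihomog mdeg j q \is (k + j).-homog by apply: dhomogM => //; exact: pihomogP.
case: (eqVneq (k + j)%N d) => [<-|ne].
  by rewrite pihomog_dE //; apply: vanMr.
by rewrite (pihomog_ne0 ne hj); exact: van0.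
Qed.

Lemma evalvXe2 v : evalv v 'X_[e2] = v 0 tl ^+ 2.
Proof.
rewrite /evalv mpolyXD mevalM mevalX.
rewrite (bigD1 tl) //= mnm1E eqxx expr1 big1 ?mulr1 ?expr2 //.
by move=> i ne; rewrite mnm1E eq_sym (negbTE ne) expr0.
Qed.

Lemma van_div g : van (g * 'X_[e2]) -> van g.
Proof.
move=> h P hP v hv; move: (h P hP v hv); rewrite /evalv mevalM -/(evalv v g) -/(evalv v 'X_[e2]) evalvXe2.
by move/eqP; rewrite mulf_eq0 expf_eq0 /= (negbTE (Xset_coord tl hP hv)) orbF => /eqP.
Qed.


Implicit Types m u w : 'X_{1..s}.
Definition LI (m : 'X_{1..s}) : Prop :=
  exists f : {mpoly K[s]}, f \is (mdeg m).-homog /\ van f /\ grevlex_lead f m.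

Lemma e2E i : e2 i = ((tl == i) + (tl == i))%N.
Proof. by rewrite mnmDE mnm1E. Qed.

Lemma e2_le u : (2 <= u tl)%N -> (e2 <= u)%MM.
Proof.
move=> h; apply/mnm_lepP => i; rewrite e2E; case: eqP => [<-//|_]; done.
Qed.

Lemma e2_tl u : (e2 + u)%MM tl = (u tl).+2.
Proof. by rewrite mnmDE e2E eqxx. Qed.

Lemma mdeg_e2 : mdeg e2 = 2%N.
Proof. by rewrite mdegD mdeg1. Qed.

Lemma lead_X w : grevlex_lead ('X_[w] : {mpoly K[s]}) w.
Proof.
split; first by apply/eqP => /(congr1 (mcoeff w)); rewrite mcoeffX eqxx mcoeff0 => /eqP; rewrite oner_eq0.
split; first exact/mem_msuppXP.
by move=> u' /mem_msuppXP ->; left.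
Qed.

Lemma LI_up m : LI m -> LI (e2 + m)%MM.
Proof.
case=> f [hf [vf lf]]; exists (f * 'X_[e2]); split; last split.
- by rewrite mdegD addnC; apply: dhomogM => //; rewrite dhomogX.
- exact: vanMr.
- exact: leadMX.
Qed.

Lemma LI_down m : LI (e2 + m)%MM -> LI m.
Proof.
case=> f [hf [vf lf]].
have hdeg := dhomog_mf hf.
have hall : forall u, u \in msupp f -> (2 <= u tl)%N.
  move=> u hu; rewrite leqNgt; apply/negP => lt.
  have g1 : glt (e2 + m)%MM u.
    by apply: glt_tl; [rewrite (hdeg _ hu) | rewrite e2_tl (leq_trans lt)].
  case: lf => _ [_ /(_ u hu) [eu|g2]].
    by move: lt; rewrite eu e2_tl.
  by move: (glt_trans g1 g2); rewrite (negbTE (glt_irr _)).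
pose g := \sum_(u <- msupp f) f@_u *: ('X_[u - e2] : {mpoly K[s]}).
have fg : f = g * 'X_[e2].
  rewrite /g mulr_suml {1}(mpolyE f) !big_seq; apply: eq_bigr => u hu.
  by rewrite -scalerAl -mpolyXD submK //; apply: e2_le; apply: hall.
have cg u : g@_u = f@_(e2 + u).
  by rewrite fg mcoeffMX.
case: lf => nzf [im hm].
have gm : g@_m != 0 by rewrite cg -mcoeff_msupp.
exists g; split; last split.
- apply/dhomogP => u'; rewrite mcoeff_msupp cg -mcoeff_msupp => /hdeg.
  by move=> h; apply/eqP; rewrite -(eqn_add2l (mdeg e2)) -!mdegD h.
- by apply: van_div; rewrite -fg.
- split; first by apply: contraNneq gm => ->; rewrite mcoeff0.
  split; first by rewrite mcoeff_msupp.
  move=> u'; rewrite mcoeff_msupp cg -mcoeff_msupp => /hm [/addmI ->|]; first by left.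
  by rewrite glt_addl; right.
Qed.

Lemma inB_iff d m : in_B hs e d m <-> [/\ mdeg m = d, ~ LI m & (m tl < 2)%N].
Proof.
split.
- case=> hd nex; split => //.
  + case=> f [hf [vf lf]]; apply: nex; exists f, m; split; last by split=> //; exact: lepm_refl.
    exists [:: (f, 1)], 0; split; first by move=> p; rewrite mem_seq1 => /eqP -> /=; split=> //; exists (mdeg m).
    by rewrite big_seq1 /= mulr1 mul0r addr0.
  + rewrite ltnNge; apply/negP => h2; apply: nex; exists ('X_[e2]), e2; split; last first.
      by split; [exact: lead_X | exact: e2_le].
    exists [::], 1; split=> //.
    by rewrite big_nil add0r mul1r expr2 -mpolyXD.
- case=> hd nLI htl; split=> //.
  case=> g [u [[r [h [hr hg]]] [hl hum]]].
  set w := (m - u)%MM.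
  have hmw : m = (w + u)%MM by rewrite /w submK.
  have lG := leadMX w hl; rewrite -hmw in lG.
  set G := g * 'X_[w] in lG.
  pose A := \sum_(p <- r) p.1 * (p.2 * 'X_[w]).
  pose Bp := (h * 'X_[w]) * ('X_[e2] : {mpoly K[s]}).
  have GAB : G = A + Bp.
    rewrite /G hg mulrDl mulr_suml /A /Bp; congr (_ + _).
      by apply: eq_bigr => p _; rewrite mulrA.
    by rewrite mpolyXD -expr2 mulrAC.
  pose a := pihomog mdeg d A; pose b := pihomog mdeg d Bp.
  have va : van a.
    rewrite /a /A raddf_sum /=; apply: van_sum => p /hr [[k hk] vk].
    exact: van_pihomogM hk vk.
  have b0 u' : (u' tl < 2)%N -> b@_u' = 0.
    move=> lt; rewrite /b pihom_coef; case: ifP => // _.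
    apply: memN_msupp_eq0; rewrite (perm_mem (msuppMX _ _)); apply/mapP => -[x _ ex].
    by move: lt; rewrite ex e2_tl.
  have cG u' : mdeg u' = d -> G@_u' = a@_u' + b@_u'.
    by move=> du; rewrite -mcoeffD -raddfD /= -GAB pihom_coef du eqxx.
  case: lG => nzG [imG hmG].
  have am : a@_m = G@_m by rewrite cG // b0 // addr0.
  apply: nLI; exists a; split; last split => //.
  - by rewrite hd; exact: pihomogP.
  - split; first by apply/eqP => a0; move: imG; rewrite mcoeff_msupp -am a0 mcoeff0 eqxx.
    split; first by rewrite mcoeff_msupp am -mcoeff_msupp.
    move=> u'; rewrite mcoeff_msupp => hu'.
    have du : mdeg u' = d.
      by apply/eqP; apply: contraNT hu' => ne; rewrite /a pihom_coef (negbTE ne).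
    case: (ltnP (u' tl) 2) => lt.
      apply: hmG; rewrite mcoeff_msupp cG // b0 // addr0 //.
    by right; apply: glt_tl; [rewrite du hd | exact: leq_trans htl lt].
Qed.


Lemma pboolP (P : Prop) : reflect P (pbool P).
Proof. by rewrite /pbool; case: excluded_middle_informative => h; constructor. Qed.

Lemma rep_in P : P \in Xset e -> rep P \in P.
Proof.
move=> hP; rewrite /rep; case: pickP => [v hv //|h].
case/imsetP: hP => x _ eP; move: (h (1 *: edge_map e x)); rewrite eP.
by move/negP; case; apply/imsetP; exists 1; rewrite ?inE ?oner_eq0.
Qed.

Lemma evalv_scale d (f : {mpoly K[s]}) (c : K) (v : 'rV[K]_s) : f \is d.-homog -> evalv (c *: v) f = c ^+ d * evalv v f.
Proof.
move=> /dhomogP hf; rewrite /evalv !mevalE mulr_sumr big_seq [RHS]big_seq.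
apply: eq_bigr => m hm; rewrite [RHS]mulrCA; congr (_ * _).
have -> : d = mdeg m by rewrite -(hf m hm).
rewrite (mdegE m) -prodrXr -big_split /=; apply: eq_bigr => i _.
by rewrite mxE exprMn.
Qed.

Lemma evalvXn (v : 'rV[K]_s) (i : 'I_s) d : evalv v ('X_i ^+ d) = v 0 i ^+ d.
Proof.
elim: d => [|d IH]; first by rewrite /evalv expr0 meval1 expr0.
by rewrite exprS /evalv mevalM mevalXU -/(evalv v ('X_i ^+ d)) IH exprS.
Qed.

Lemma cw_van d (f : {mpoly K[s]}) : f \is d.-homog -> (codeword hs e d f = 0 <-> van f).
Proof.
move=> hf; split.
- move=> h0 P hP v hv.
  have := congr1 (fun M : 'rV[K]_#|Xset e| => M 0 (enum_rank_in hP P)) h0; rewrite !mxE enum_rankK_in //.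
  move/eqP; rewrite mulf_eq0 invr_eq0 evalvXn expf_eq0 (negbTE (Xset_coord _ hP (rep_in hP))) andbF orbF.
  have hr := rep_in hP; case/imsetP: hP hv hr => x _ -> /imsetP[c]; rewrite inE => nc ->.
  case/imsetP => c'; rewrite inE => nc' ->.
  rewrite !(evalv_scale _ _ hf) => /eqP/eqP; rewrite mulf_eq0 expf_eq0 (negbTE nc') andbF /= => /eqP->.
  by rewrite mulr0.
- move=> hv; apply/matrixP => i j; rewrite !mxE.
  by rewrite (hv _ (enum_valP j) _ (rep_in (enum_valP j))) mul0r.
Qed.


Definition Sset (d : nat) : {set 'X_{1..s < d.+1}} :=
  [set b | (mdeg (bmnm b) == d) && ~~ pbool (LI (bmnm b))].
Definition Tseq d := [seq bmnm b | b <- enum (Sset d)].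
Definition Sv d := [seq codeword hs e d 'X_[u] | u <- Tseq d].

Lemma Tseq_mem d u : u \in Tseq d -> mdeg u = d /\ ~ LI u.
Proof.
case/mapP => b; rewrite mem_enum inE => /andP[/eqP hd /negP hL] ->.
by split=> // /pboolP.
Qed.

Lemma span_step d : forall k u,
  (#|[set b : 'X_{1..s < d.+1} | glt (bmnm b) u]| < k)%N -> mdeg u = d ->
  codeword hs e d 'X_[u] \in <<Sv d>>%VS.
Proof.
elim=> // k IH u hk hd.
case: (pboolP (LI u)) => hL; last first.
  have hb : (mdeg u < d.+1)%N by rewrite hd.
  apply: memv_span; apply: map_f; apply/mapP; exists (BMultinom hb) => //.
  by rewrite mem_enum inE /= hd eqxx; apply/negP => /pboolP.
case: hL => f [hf [vf [nzf [iu hu]]]].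
have hf' : f \is d.-homog by rewrite -hd.
have c0 : f@_u != 0 by rewrite -mcoeff_msupp.
have phi0 : codeword hs e d f = 0 by apply/(cw_van hf').
have E : f@_u *: codeword hs e d 'X_[u] =
    - \sum_(x <- msupp f | x != u) f@_x *: codeword hs e d 'X_[x].
  move: phi0; rewrite {1}(mpolyE f) codeword_sum.
  under eq_bigr do rewrite codewordZ.
  rewrite (bigD1_seq u) ?msupp_uniq //=.
  by move/eqP; rewrite addr_eq0 => /eqP.
have -> : codeword hs e d 'X_[u] = (f@_u)^-1 *: (f@_u *: codeword hs e d 'X_[u]).
  by rewrite scalerA mulVf // scale1r.
apply: memvZ; rewrite E memvN big_seq_cond; apply: memv_suml => x /andP[hx nx].
have gx : glt x u by case: (hu x hx) => // ex; rewrite ex eqxx in nx.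
have dx : mdeg x = d by rewrite (dhomog_mf hf' hx).
apply: memvZ; apply: (IH x _ dx).
have hbx : (mdeg x < d.+1)%N by rewrite dx.
rewrite -ltnS; apply: leq_trans hk; apply: proper_card; apply/properP; split.
  by apply/subsetP => b; rewrite !inE => h; apply: glt_trans gx.
by exists (BMultinom hbx); rewrite !inE //= glt_irr.
Qed.

Lemma free_Sv d : free (Sv d).
Proof.
suff : free (in_tuple (Sv d)) by [].
apply/freeP => k hk.
set T := Tseq d.
have sz : size (Sv d) = size T by rewrite size_map.
have uT : uniq T by rewrite map_inj_uniq ?enum_uniq //; exact: val_inj.
pose F := \sum_(i < size (Sv d)) k i *: ('X_[nth 0%MM T i] : {mpoly K[s]}).
have memT (i : 'I_(size (Sv d))) : nth 0%MM T i \in T by rewrite mem_nth // -sz.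
have Fh : F \is d.-homog.
  apply: rpred_sum => i _; apply: rpredZ; rewrite dhomogX.
  by case: (Tseq_mem (memT i)) => du _; apply/eqP; exact: du.
have coefF x : F@_x = \sum_(i < size (Sv d)) k i * (nth 0%MM T i == x)%:R.
  rewrite /F raddf_sum; apply: eq_bigr => i _.
  by have := mcoeffZ (k i) ('X_[nth 0%MM T i] : {mpoly K[s]}) x; rewrite mcoeffX.
have cF j : F@_(nth 0%MM T (val j)) = k j.
  rewrite coefF (bigD1 j) //= eqxx mulr1 big1 ?addr0 // => i nij.
  move: nij; rewrite -val_eqE /= => /negbTE nij.
  by rewrite nth_uniq -?sz // nij mulr0.
have phiF : codeword hs e d F = 0.
  rewrite codeword_sum -[RHS]hk; apply: eq_bigr => i _.
  by rewrite codewordZ /= (nth_map 0%MM) // -sz.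
have vF : van F by apply/(cw_van Fh).
move=> i; apply/eqP; apply/negPn/negP => nk.
have nzF : F != 0 by apply: contraNneq nk => F0; rewrite -cF F0 mcoeff0.
case: (lead_exists nzF) => u lu.
have [j hj] : exists j : 'I_(size (Sv d)), nth 0%MM T j = u.
  case: (pickP (fun j : 'I_(size (Sv d)) => nth 0%MM T j == u)) => [j /eqP hj | none].
    by exists j.
  move: (lu.2.1); rewrite mcoeff_msupp coefF big1 ?eqxx // => i' _.
  by rewrite none mulr0.
case: (Tseq_mem (memT j)); rewrite hj => du; apply.
move: Fh; rewrite -du => Fh.
by exists F; split.
Qed.

Lemma CX_span d : CX hs e d = <<Sv d>>%VS.
Proof.
apply/vspaceP => v; apply/idP/idP.
- case/CXP => f [hf ->]; rewrite {1}(mpolyE f) codeword_sum big_seq.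
  apply: memv_suml => x hx; rewrite codewordZ; apply: memvZ.
  exact: (span_step (leqnn _) (dhomog_mf hf hx)).
- move: v; apply/subvP/span_subvP => v /mapP[u /Tseq_mem [du _] ->].
  by apply/CXP; exists 'X_[u]; rewrite dhomogX; split=> //; apply/eqP; exact: du.
Qed.

Lemma dim_CX d : \dim (CX hs e d) = #|Sset d|.
Proof. by rewrite CX_span (eqP (free_Sv d)) !size_map -cardE. Qed.


Lemma coord_le_deg (m : 'X_{1..s}) i : (m i <= mdeg m)%N.
Proof. by rewrite mdegE (bigD1 i) //= leq_addr. Qed.

Definition Bset (d : nat) : {set 'X_{1..s < d.+1}} := [set b | (bmnm b tl < 2)%N].

Lemma beta_Sset d : beta hs e d = #|Sset d :&: Bset d|.
Proof.
rewrite /beta; apply: eq_card => b; rewrite !inE; apply/pboolP/idP.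
- case/inB_iff => hd nL tl2; rewrite hd eqxx tl2 andbT /=.
  by apply/negP => /pboolP.
- case/andP => /andP[/eqP hd /negP nL] t; apply/inB_iff; split => // /pboolP.
  exact: nL.
Qed.

Lemma Sset_small d : (d < 2)%N -> Sset d :\: Bset d = set0.
Proof.
move=> h; apply/setP => b; rewrite !inE; apply/negP => /andP[/negP nB /andP[/eqP hd _]].
by apply: nB; apply: leq_ltn_trans (coord_le_deg _ _) _; rewrite hd.
Qed.

Lemma hb_proof d (b : 'X_{1..s < d.+1}) : (mdeg (e2 + bmnm b)%MM < d.+3)%N.
Proof. rewrite mdegD mdeg_e2 add2n !ltnS. case: b => b hb /=. done. Qed.

Definition hb d (b : 'X_{1..s < d.+1}) : 'X_{1..s < d.+3} := BMultinom (hb_proof b).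

Lemma Sset_step d : #|Sset d.+2 :\: Bset d.+2| = #|Sset d|.
Proof.
rewrite -(@card_in_imset _ _ (@hb d)); last first.
  by move=> b1 b2 _ _ /(congr1 val) /= /addmI /val_inj.
apply: eq_card => x; apply/idP/idP.
- rewrite !inE -leqNgt => /andP[h2 /andP[/eqP hd /negP nL]].
  have le := e2_le h2.
  have hdeg : mdeg (bmnm x - e2)%MM = d.
    by apply/eqP; rewrite -(eqn_add2l 2) -{1}mdeg_e2 -mdegD addmC submK // hd.
  have hbd : (mdeg (bmnm x - e2)%MM < d.+1)%N by rewrite hdeg.
  apply/imsetP; exists (BMultinom hbd).
    rewrite inE /= hdeg eqxx /=; apply/negP => /pboolP /LI_up.
    by rewrite addmC submK // => h; apply: nL; apply/pboolP.
  by apply: val_inj; rewrite /= addmC submK.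
- case/imsetP => b; rewrite !inE => /andP[/eqP hd /negP nL] ->; rewrite /= e2_tl /=.
  rewrite mdegD mdeg_e2 hd eqxx /=; apply/negP => /pboolP /LI_down h.
  by apply: nL; apply/pboolP.
Qed.

Lemma cnt d : (\sum_(i < d./2.+1) beta hs e (d - 2 * i))%N = #|Sset d|.
Proof.
elim/ltn_ind: d => d IH.
have sp d' : #|Sset d'| = (beta hs e d' + #|Sset d' :\: Bset d'|)%N by rewrite beta_Sset cardsID.
case: d IH => [|[|d]] IH.
- by rewrite big_ord1 sp Sset_small ?cards0 ?addn0.
- by rewrite big_ord1 sp Sset_small ?cards0 ?addn0.
rewrite big_ord_recl /= sp Sset_step -(IH d) //; congr (_ + _)%N.
apply: eq_bigr => i _.
by rewrite (_ : (d.+2 - 2 * lift ord0 i = d - 2 * i)%N) // lift0; lia.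
Qed.

End Main.

Theorem proposition2p2 (n s : nat) (hs : (0 < s)%N) (e : 'I_s -> {set 'I_n}) :
  simple_graph_edges e ->
  forall d : nat,
    \dim (CX hs e d) = (\sum_(i < d./2.+1) beta hs e (d - 2 * i))%N.
Proof. by move=> _ d; rewrite dim_CX cnt. Qed.
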